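(* Let $n\ge 1$ and $a\ge 2$ be integers and $r>0$. For $j\in\mathbb Z$ let $P_j=\bigl(r\cos(2\pi j/n),\, r\sin(2\pi j/n)\bigr)$. Let $E$ be the set of unordered pairs $\{s,t\}$ of distinct elements of $\mathbb Z_n$ such that $t\equiv as \pmod n$ or $s\equiv at \pmod n$ (the set of distinct non-degenerate line segments of the residue design, each counted once). Then \[\sum_{\{s,t\}\in E} |P_sP_t| \;=\; 2rg_1\cot\left(\frac{\pi g_1}{2n}\right)-rg_2\cot\left(\frac{\pi g_2}{2m}\right),\] where $m$ is the largest positive divisor of $n$ for which $a^2\equiv 1 \pmod m$, $g_1=\gcd(a-1,n)$ and $g_2=\gcd(a-1,m)$. *)

(* Defs.v *)
From Stdlib Require Import Reals.
From mathcomp Require Import all_boot all_order all_algebra.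
From mathcomp Require Import Rstruct.

Set Implicit Arguments.
Unset Strict Implicit.
Unset Printing Implicit Defensive.

Definition cot (x : R) : R := (cos x / sin x)%R.

Definition Ppt (n : nat) (r : R) (j : nat) : R * R :=
  ((r * cos (2 * PI * INR j / INR n))%R, (r * sin (2 * PI * INR j / INR n))%R).

Definition dist2 (P Q : R * R) : R :=
  sqrt ((P.1 - Q.1) ^ 2 + (P.2 - Q.2) ^ 2)%R.

(* E: unordered pairs {s,t} of distinct residues mod n with t = a s or s = a t (mod n);
   each unordered pair {s,t} is represented once, by the ordered pair (s,t) with s < t. *)
Definition edge (n a : nat) (p : 'I_n * 'I_n) : bool :=
  (p.1 < p.2)%N &&
  ((p.2 == a * p.1 %[mod n]) || (p.1 == a * p.2 %[mod n])).

Definition mdiv (n a : nat) : nat :=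
  \max_(d < n.+1 | (0 < d)%N && (d %| n) && (a ^ 2 == 1 %[mod d])) d.

Definition total_length (n a : nat) (r : R) : R :=
  (\sum_(p : 'I_n * 'I_n | edge a p) dist2 (Ppt n r p.1) (Ppt n r p.2))%R.

(* Main.v *)
Require Import Defs.
From Stdlib Require Import Reals Lra Psatz.
From mathcomp Require Import all_boot all_order all_algebra.
From mathcomp Require Import Rstruct zify.
Import GRing.Theory Num.Theory.
Ltac slra := lra.
Ltac snra := nra.
From mathcomp Require Import lra.
Local Open Scope R_scope.

Lemma cotE y : cot y = Rdiv (cos y) (sin y). Proof. reflexivity. Qed.

Lemma tele (x : R) K : 2 * sin (x/2) * (\sum_(k < K) sin (INR k * x))%R
   = cos (x/2) - cos (INR K * x - x/2).
Proof.
elim: K => [|K IH].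
  rewrite big_ord0 /=. replace (0 * x - x/2) with (- (x/2)) by ring.
  rewrite cos_neg. change (GRing.zero) with R0. ring.
rewrite big_ord_recr Rmult_plus_distr_l IH.
rewrite S_INR. change (INR (nat_of_ord (@ord_max K))) with (INR K).
replace ((INR K + 1) * x - x / 2) with (INR K * x + x/2) by field.
replace (INR K * x - x / 2) with (INR K * x - x/2) by field.
rewrite cos_plus cos_minus. ring.
Qed.

Lemma sum_sin N : (0 < N)%N -> (\sum_(k < N) sin (PI * INR k / INR N))%R = cot (PI / (2 * INR N)).
Proof.
move=> N0.
have Npos : 1 <= INR N by apply: (le_INR 1); apply/leP.
set x := PI / INR N.
have P := PI_RGT_0.
have hs : 0 < sin (PI / (2 * INR N)).
  apply: sin_gt_0.
  - apply: Rdiv_lt_0_compat; slra.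
  - apply (Rmult_lt_reg_r (2 * INR N)); first slra.
    field_simplify; snra.
have E := tele x N.
replace (INR N * x - x / 2) with (PI - PI / (2 * INR N)) in E by (rewrite /x; field; slra).
replace (x / 2) with (PI / (2 * INR N)) in E by (rewrite /x; field; slra).
rewrite cos_minus cos_PI sin_PI in E.
have -> : (\sum_(k < N) sin (PI * INR k / INR N))%R = (\sum_(k < N) sin (INR k * x))%R.
  apply: eq_bigr => k _; congr sin; rewrite /x; field; slra.
rewrite cotE.
apply (Rmult_eq_reg_l (2 * sin (PI / (2 * INR N)))); last slra.
rewrite E. field. slra.
Qed.

Lemma INRM m n : INR (m * n)%N = INR m * INR n.
Proof. by rewrite !INRE natrM. Qed.
Lemma INRD m n : INR (m + n)%N = INR m + INR n.
Proof. by rewrite !INRE natrD. Qed.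

Lemma abs_sin_shift y q : Rabs (sin (y + INR q * PI)) = Rabs (sin y).
Proof.
elim: q => [|q IH]; first by rewrite /= Rmult_0_l Rplus_0_r.
rewrite S_INR. replace (y + (INR q + 1) * PI) with ((y + INR q * PI) + PI) by ring.
by rewrite neg_sin Rabs_Ropp.
Qed.

Lemma periodic_sum (F : nat -> R) N : (forall i, F (i + N)%N = F i) -> forall k,
  (\sum_(s < N * k) F s)%R = INR k * (\sum_(s < N) F s)%R.
Proof.
move=> Hp.
have Hk : forall k i, F (i + N * k)%N = F i.
  elim=> [|k IH] i; first by rewrite muln0 addn0.
  by rewrite mulnS addnA IH Hp.
elim => [|k IH].
  by rewrite muln0 big_ord0 Rmult_0_l.
rewrite -!(big_mkord xpredT) mulnS addnC (@big_cat_nat _ _ _ (N * k)) // /=; last by rewrite leq_addr.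
rewrite !big_mkord IH.
rewrite -{1}[(N * k)%N]add0n big_addn addKn.
rewrite (eq_bigr F); last by move=> i _; rewrite Hk.
rewrite big_mkord.
change (match k with 0%N => 1 | _.+1 => INR k + 1 end) with (INR k.+1).
rewrite S_INR Rmult_plus_distr_r Rmult_1_l. reflexivity.
Qed.

Lemma perm_sum (G : nat -> R) N c' : (0 < N)%N -> coprime c' N ->
  (\sum_(s < N) G ((c' * s) %% N)%N)%R = (\sum_(s < N) G s)%R.
Proof.
move=> N0 cop.
have cop' : coprime N c' by rewrite coprime_sym.
pose h (i : 'I_N) : 'I_N := Ordinal (ltn_pmod (c' * i) N0).
have hinj : injective h.
  move=> i j /(congr1 val) /= e.
  have key : forall i j : 'I_N, (i <= j)%N -> (c' * i) %% N = (c' * j) %% N -> i = j.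
    move=> x y le e'.
    have : (N %| y - x)%N.
      rewrite -(Gauss_dvdr _ cop') mulnBr -eqn_mod_dvd; last by rewrite leq_mul2l le orbT.
      by apply/eqP.
    case: (posnP (y - x)) => [d0 _ | dpos dv].
      apply: val_inj => /=; lia.
    have := dvdn_leq dpos dv. have := ltn_ord y. lia.
  case: (leqP i j) => [le|lt]; first exact: key.
  by apply/esym/key; [exact: ltnW|].
rewrite [RHS](reindex_inj hinj) /=.
done.
Qed.

Lemma sum_abs_sin c n : (0 < n)%N ->
  (\sum_(s < n) Rabs (sin (PI * INR (c * s) / INR n)))%R
  = INR (gcdn c n) * cot (PI * INR (gcdn c n) / (2 * INR n)).
Proof.
move=> n0.
have [g hg] : exists g, g = gcdn c n by eexists.
rewrite -hg.
have g0 : (0 < g)%N by rewrite hg gcdn_gt0 n0 orbT.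
have hn := esym (divnK (dvdn_gcdr c n)). rewrite -hg in hn.
have hc := esym (divnK (dvdn_gcdl c n)). rewrite -hg in hc.
move: (n %/ g)%N hn => N hn. move: (c %/ g)%N hc => c' hc.
have N0 : (0 < N)%N by move: n0; rewrite hn muln_gt0 => /andP[].
have cop : coprime c' N.
  rewrite /coprime; apply/eqP.
  have : (gcdn c' N * g = 1 * g)%N by rewrite muln_gcdl -hc -hn -hg mul1n.
  by move/eqP; rewrite eqn_mul2r eqn0Ngt g0 /= => /eqP.
have gR : 0 < INR g by apply: (lt_INR 0); apply/ltP.
have NR : 0 < INR N by apply: (lt_INR 0); apply/ltP.
pose F s := sin (PI * INR ((c' * s) %% N)%N / INR N).
have step1 : forall s, Rabs (sin (PI * INR (c * s) / INR n)) = F s.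
  move=> s.
  have e : INR (c' * s) = INR ((c' * s) %/ N) * INR N + INR ((c' * s) %% N).
    by rewrite {1}(divn_eq (c' * s) N) INRD INRM.
  have e2 : INR (c * s) = INR (c' * s) * INR g.
    by rewrite -INRM hc; congr INR; lia.
  have -> : PI * INR (c * s) / INR n = PI * INR ((c' * s) %% N) / INR N + INR ((c' * s) %/ N) * PI.
    rewrite e2 e hn INRM. field; slra.
  rewrite abs_sin_shift Rabs_pos_eq //.
  have P := PI_RGT_0.
  have lt : INR ((c' * s) %% N) <= INR N by apply: le_INR; apply/leP; apply: ltnW; apply: ltn_pmod.
  have ge : 0 <= INR ((c' * s) %% N) by apply: pos_INR.
  apply: sin_ge_0.
  - apply: Rmult_le_pos; [snra | apply: Rlt_le; apply: Rinv_0_lt_compat; slra].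
  - apply (Rmult_le_reg_r (INR N)); first slra.
    field_simplify; snra.
rewrite (eq_bigr (fun s : 'I_n => F s)); last by move=> s _; apply: step1.
rewrite hn periodic_sum; last first.
  move=> i; rewrite /F; congr (sin (PI * INR _ / _)).
  by rewrite mulnDr addnC modnMDl.
rewrite /F (perm_sum (fun k => sin (PI * INR k / INR N))) // sum_sin //.
congr (_ * cot _). rewrite INRM. field; slra.
Qed.
Lemma dist2E P Q : dist2 P Q = sqrt (Rsqr (fst P - fst Q) + Rsqr (snd P - snd Q)).
Proof. reflexivity. Qed.
Lemma PptE n r j : Ppt n r j = (r * cos (2 * PI * INR j / INR n), r * sin (2 * PI * INR j / INR n)).
Proof. reflexivity. Qed.

Lemma dist_eq n r s t : 0 < r ->
  dist2 (Ppt n r s) (Ppt n r t) = 2 * r * Rabs (sin (PI * (INR s - INR t) / INR n)).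
Proof.
move=> hr.
rewrite dist2E !PptE /=.
set th := PI * (INR s - INR t) / INR n.
set A := 2 * PI * INR s / INR n. set B := 2 * PI * INR t / INR n.
have hAB : A - B = 2 * th by rewrite /A /B /th /Rdiv; ring.
have c2 := cos_2a_sin th. rewrite -hAB cos_minus in c2.
have eA := sin2_cos2 A. have eB := sin2_cos2 B.
replace (Rsqr (r * cos A - r * cos B) + Rsqr (r * sin A - r * sin B)) with (Rsqr (2 * r * sin th)).
  by rewrite sqrt_Rsqr_abs Rabs_mult (Rabs_pos_eq (2 * r)) //; slra.
rewrite /Rsqr in eA eB *. snra.
Qed.
Lemma sum_pick n (f : nat -> R) x : (x < n)%N ->
  (\sum_(j < n) if (j : nat) == x then f j else 0)%R = f x.
Proof.
move=> hx.
rewrite -big_mkcond /= (big_pred1 (Ordinal hx)) //.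
Qed.

Lemma edge_sum n a (D : nat -> nat -> R) : (forall s t, D s t = D t s) -> (forall s, D s s = 0) ->
 (\sum_(p : 'I_n * 'I_n | edge a p) D p.1 p.2)%R =
   (\sum_(s < n) D s ((a * s) %% n)%N)%R
   - / 2 * (\sum_(s < n) if ((s : nat) == (a * ((a * s) %% n)) %% n)%N then D s ((a * s) %% n)%N else 0)%R.
Proof.
move=> Dsym D0.
pose A (p : 'I_n * 'I_n) := ((p.2 : nat) == (a * p.1) %% n)%N.
pose B (p : 'I_n * 'I_n) := ((p.1 : nat) == (a * p.2) %% n)%N.
pose W (p : 'I_n * 'I_n) := if edge a p then D p.1 p.2 else 0.
pose sw (p : 'I_n * 'I_n) := (p.2, p.1).
have swinj : injective sw by move=> [x y] [x' y'] [-> ->].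
have edgeE : forall p, edge a p = ((p.1 < p.2)%N && (A p || B p)).
  by move=> [x y]; rewrite /edge /A /B /= !(modn_small (ltn_ord _)).
have hsw : (\sum_p W p = \sum_p W (sw p))%R by rewrite (reindex_inj swinj).
have hpt : forall p, (W p + W (sw p) = (if A p then D p.1 p.2 else 0) + (if B p then D p.1 p.2 else 0)
                       - (if A p && B p then D p.1 p.2 else 0))%R.
  move=> [x y]; rewrite /W !edgeE /A /B /sw /= (Dsym y x).
  case: (ltngtP x y) => [lt|lt|eq] /=.
  - case: (_ == _); case: (_ == _) => /=; rewrite ?addr0 ?subr0 ?add0r ?sub0r ?subrr //; lra.
  - case: (_ == _); case: (_ == _) => /=; rewrite ?addr0 ?subr0 ?add0r ?sub0r ?subrr //; lra.
  - have -> : y = x by apply: val_inj.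
    rewrite D0 !if_same R0E; lra.
have hB : (\sum_p (if B p then D p.1 p.2 else 0) = \sum_p (if A p then D p.1 p.2 else 0))%R.
  rewrite (reindex_inj swinj); apply: eq_bigr => [[x y]] _; rewrite /A /B /sw /=.
  by rewrite Dsym.
have hsplit : (\sum_p W p + \sum_p W p =
   \sum_p (if A p then D p.1 p.2 else 0) + \sum_p (if B p then D p.1 p.2 else 0)
   - \sum_p (if A p && B p then D p.1 p.2 else 0))%R.
  rewrite {2}hsw -big_split /= -big_split /= -sumrB.
  by apply: eq_bigr => p _; rewrite hpt.
rewrite hB in hsplit.
have hX : (\sum_p (if A p then D p.1 p.2 else 0))%R = (\sum_(s < n) D s ((a * s) %% n)%N)%R.
  rewrite -(pair_big xpredT xpredT (fun (i j : 'I_n) => if (j : nat) == (a * i) %% n then D i j else 0)) /=.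
  apply: eq_bigr => i _.
  by rewrite (sum_pick _ (D i)) // ltn_pmod // (leq_ltn_trans _ (ltn_ord i)).
have hY : (\sum_p (if A p && B p then D p.1 p.2 else 0))%R =
   (\sum_(s < n) if ((s : nat) == (a * ((a * s) %% n)) %% n)%N then D s ((a * s) %% n)%N else 0)%R.
  rewrite -(pair_big xpredT xpredT (fun (i j : 'I_n) => if ((j : nat) == (a * i) %% n) && ((i : nat) == (a * j) %% n) then D i j else 0)) /=.
  apply: eq_bigr => i _.
  rewrite -(sum_pick n (fun j => if (i : nat) == (a * j) %% n then D i j else 0)); last first.
    by rewrite ltn_pmod // (leq_ltn_trans _ (ltn_ord i)).
  by apply: eq_bigr => j _; case: (_ == _).
rewrite hX hY in hsplit.
rewrite big_mkcond /=.
change (\sum_(i : 'I_n * 'I_n) (if edge a i then D i.1 i.2 else 0))%R with (\sum_p W p)%R.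
move: hsplit.
move: (\sum_p W p)%R (\sum_(s < n) D s ((a * s) %% n)%N)%R (\sum_(s < n) (if ((s : nat) == (a * ((a * s) %% n)) %% n)%N then D s ((a * s) %% n)%N else 0))%R.
move=> x y z; rewrite -RplusE -RminusE -RplusE => h. slra.
Qed.

Lemma sum_mult (f : nat -> R) M m : (0 < M)%N ->
 (\sum_(s < M * m) if (M %| s)%N then f s else 0)%R = (\sum_(u < m) f (M * u)%N)%R.
Proof.
move=> M0.
pose G s := if (M %| s)%N then f s else 0.
elim: m => [|m IH]; first by rewrite muln0 !big_ord0.
rewrite [RHS]big_ord_recr -IH.
rewrite -!(big_mkord xpredT G) mulnS addnC (@big_cat_nat _ _ _ (M * m)) //; last by rewrite leq_addr.
rewrite (big_addn 0 _ (M * m)) addKn.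
rewrite [\big[_/_]_(0 <= i < M) _]big_ltn //.
rewrite /G add0n dvdn_mulr // [\big[_/_]_(1 <= i < M) _]big1_seq; first by rewrite Monoid.mulm1.
move=> i /andP[_]; rewrite mem_index_iota => /andP[i1 iM].
rewrite dvdn_addl ?dvdn_mulr //.
have : ~~ (M %| i)%N.
  apply/negP => /(dvdn_leq i1). lia.
by move/negbTE => ->.
Qed.
Lemma mdivE n a : (0 < n)%N -> (0 < a)%N -> mdiv n a = gcdn (a ^ 2 - 1) n.
Proof.
move=> n0 a0.
have a2 : (1 <= a ^ 2)%N by rewrite expn_gt0 a0.
have key : forall d, (0 < d)%N -> (d %| n) && (a ^ 2 == 1 %[mod d]) = (d %| gcdn (a ^ 2 - 1) n).
  move=> d d0. by rewrite eqn_mod_dvd // dvdn_gcd andbC.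
have g0 : (0 < gcdn (a ^ 2 - 1) n)%N by rewrite gcdn_gt0 n0 orbT.
have gn : (gcdn (a ^ 2 - 1) n < n.+1)%N by rewrite ltnS dvdn_leq // dvdn_gcdr.
apply/eqP; rewrite eqn_leq; apply/andP; split.
  apply/bigmax_leqP => d /andP[/andP[d0 dn] dm].
  apply: dvdn_leq => //. by rewrite -key // dn dm.
apply: (leq_trans _ (leq_bigmax_cond (Ordinal gn) _)) => //=.
by rewrite g0 /= key // dvdnn.
Qed.

Lemma sum_const_mul n (c : R) (F : 'I_n -> R) : (\sum_(i < n) (c * F i))%R = c * (\sum_(i < n) F i)%R.
Proof. by apply: esym; apply: mulr_sumr. Qed.

Lemma sum_mult' n (f : nat -> R) M m : n = (M * m)%N -> (0 < M)%N ->
 (\sum_(s < n) if (M %| s)%N then f s else 0)%R = (\sum_(u < m) f (M * u)%N)%R.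
Proof. by move=> -> M0; apply: sum_mult. Qed.

Theorem theorem2 (n a : nat) (r : R) (hn : (1 <= n)%nat) (ha : (2 <= a)%nat) (hr : 0 < r) :
  total_length n a r
  = 2 * r * INR (gcdn (a - 1) n) * cot (PI * INR (gcdn (a - 1) n) / (2 * INR n))
    - r * INR (gcdn (a - 1) (mdiv n a))
        * cot (PI * INR (gcdn (a - 1) (mdiv n a)) / (2 * INR (mdiv n a))).
Proof.
pose D s t := dist2 (Ppt n r s) (Ppt n r t).
have nR : 0 < INR n by apply: (lt_INR 0); apply/ltP.
have Dsym : forall s t, D s t = D t s.
  move=> s t; rewrite /D !dist_eq //.
  replace (PI * (INR t - INR s) / INR n) with (- (PI * (INR s - INR t) / INR n)) by (field; slra).
  by rewrite sin_neg Rabs_Ropp.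
have D0 : forall s, D s s = 0.
  move=> s; rewrite /D dist_eq // Rminus_diag Rmult_0_r /Rdiv Rmult_0_l sin_0 Rabs_R0; ring.
have E := edge_sum n a D Dsym D0.
rewrite /D in E.
rewrite /total_length E.
have Dval : forall s, D s ((a * s) %% n)%N = 2 * r * Rabs (sin (PI * INR ((a - 1) * s) / INR n)).
  move=> s; rewrite /D dist_eq //.
  have e1 : INR (a * s) = INR ((a * s) %/ n) * INR n + INR ((a * s) %% n).
    by rewrite {1}(divn_eq (a * s) n) INRD INRM.
  have e2 : INR (a * s) = INR ((a - 1) * s) + INR s.
    rewrite -INRD; congr INR. rewrite mulnBl mul1n subnK //. by apply: leq_pmull; lia.
  replace (PI * (INR s - INR ((a * s) %% n)) / INR n)
    with (- (PI * INR ((a - 1) * s) / INR n) + INR ((a * s) %/ n) * PI).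
    by rewrite abs_sin_shift sin_neg Rabs_Ropp.
  have e3 : INR ((a * s) %% n) = INR ((a - 1) * s) + INR s - INR ((a * s) %/ n) * INR n by slra.
  rewrite e3. field. slra.
have X1 : (\sum_(s < n) D s ((a * s) %% n)%N)%R
     = 2 * r * (INR (gcdn (a - 1) n) * cot (PI * INR (gcdn (a - 1) n) / (2 * INR n))).
  rewrite -sum_abs_sin // -sum_const_mul.
  by apply: eq_bigr => s _; rewrite Dval.
rewrite /D in X1. rewrite X1.
have a0 : (0 < a)%N by lia.
rewrite mdivE //.
have [m hm] : exists m, m = gcdn (a ^ 2 - 1) n by eexists.
rewrite -hm.
have m0 : (0 < m)%N by rewrite hm gcdn_gt0 hn orbT.
have hnm := esym (divnK (dvdn_gcdr (a ^ 2 - 1) n)). rewrite -hm in hnm.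
have he := esym (divnK (dvdn_gcdl (a ^ 2 - 1) n)). rewrite -hm in he.
move: (n %/ m)%N hnm => M hnm. move: ((a ^ 2 - 1) %/ m)%N he => e he.
have M0 : (0 < M)%N by move: hn; rewrite hnm muln_gt0 => /andP[].
have cop : coprime M e.
  rewrite /coprime; apply/eqP.
  have : (gcdn M e * m = 1 * m)%N by rewrite muln_gcdl -he -hnm gcdnC -hm mul1n.
  by move/eqP; rewrite eqn_mul2r eqn0Ngt m0 /= => /eqP.
have cond : forall s : 'I_n, ((s : nat) == (a * ((a * s) %% n)) %% n)%N = (M %| s)%N.
  move=> s.
  rewrite modnMmr -{1}(modn_small (ltn_ord s)) eq_sym eqn_mod_dvd; last first.
    rewrite mulnA; apply: leq_pmull; rewrite muln_gt0 a0 //.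
  have -> : (a * (a * s) - s = (a ^ 2 - 1) * s)%N by rewrite mulnA mulnn mulnBl mul1n.
  move: (nat_of_ord s) => k. rewrite hnm he mulnAC dvdn_pmul2r //.
  by rewrite Gauss_dvdr.
have X2 : (\sum_(s < n) if ((s : nat) == (a * ((a * s) %% n)) %% n)%N then D s ((a * s) %% n)%N else 0)%R
     = 2 * r * (INR (gcdn (a - 1) m) * cot (PI * INR (gcdn (a - 1) m) / (2 * INR m))).
  rewrite (eq_bigr (fun s : 'I_n => if (M %| s)%N then D s ((a * s) %% n)%N else 0)); last first.
    by move=> s _; rewrite cond.
  rewrite (sum_mult' n (fun s => D s ((a * s) %% n)%N) M m hnm M0).
  rewrite -sum_abs_sin // -sum_const_mul.
  apply: eq_bigr => u _; rewrite Dval.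
  congr (2 * r * Rabs (sin _)).
  have -> : ((a - 1) * (M * u) = ((a - 1) * u) * M)%N by rewrite mulnCA mulnC.
  have MR : 0 < INR M by apply: (lt_INR 0); apply/ltP.
  have mR : 0 < INR m by apply: (lt_INR 0); apply/ltP.
  rewrite hnm !INRM. field. slra.
rewrite /D in X2. rewrite X2.
match goal with |- ?x = ?y => change (@eq R x y) end. field.
Qed.
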